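(* If a finite-dimensional algebra $\Lambda$ is hom-irreducible, then $\Lambda$ is ext-irreducible.
   Context: $\Bbbk$ is algebraically closed. Let $\Lambda=\Bbbk Q/I$ be the path algebra of a bound quiver (for an arbitrary finite-dimensional algebra the notions are taken for a Morita-equivalent bound quiver algebra). $\mathrm{rep}_\Lambda(\mathbf d)$ is the variety of representations $V=(V_\alpha)_{\alpha\in Q_1}$, $V_\alpha\in M_{d_{t\alpha}\times d_{s\alpha}}(\Bbbk)$, satisfying the relations in $I$. Hom-irreducibility: $\mathcal H_\Lambda(\mathbf e,\mathbf d)$ is the variety of triples $(V,W,f)$ with $V\in\mathrm{rep}_\Lambda(\mathbf e)$, $W\in\mathrm{rep}_\Lambda(\mathbf d)$ and $f=(f_x)$, $f_x\in M_{d_x\times e_x}(\Bbbk)$, with $W_\alpha f_{s\alpha}=f_{t\alpha}V_\alpha$ for all $\alpha$; $\Lambda$ is hom-irreducible if all $\mathcal H_\Lambda(\mathbf e,\mathbf d)$ are irreducible. Ext-irreducibility: for $V\in\mathrm{rep}_\Lambda(\mathbf d)$, $U\in\mathrm{rep}_\Lambda(\mathbf e)$, $Z=(Z_\alpha)$ with $Z_\alpha\in M_{d_{t\alpha}\times e_{s\alpha}}(\Bbbk)$, let $W^{V,Z,U}_\alpha=\begin{pmatrix}V_\alpha&Z_\alpha\\0&U_\alpha\end{pmatrix}$ and $\mathbb Z^{U,V}$ the set of $Z$ for which $W^{V,Z,U}$ satisfies the relations of $I$. $\mathcal E_\Lambda(\mathbf e,\mathbf d)$ is the variety of triples $(U,V,Z)$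 with $U\in\mathrm{rep}_\Lambda(\mathbf e)$, $V\in\mathrm{rep}_\Lambda(\mathbf d)$, $Z\in\mathbb Z^{U,V}$; $\Lambda$ is ext-irreducible if all $\mathcal E_\Lambda(\mathbf e,\mathbf d)$ are irreducible. *)

(* Defs.v *)
From HB Require Import structures.
From mathcomp Require Import all_boot all_order all_algebra.
Set Implicit Arguments. Unset Strict Implicit. Unset Printing Implicit Defensive.
Import GRing.Theory.
Local Open Scope ring_scope.

Inductive polyfun (K : nzRingType) (J : Type) : ((J -> K) -> K) -> Prop :=
| pf_const (c : K) : polyfun (fun _ => c)
| pf_var (j : J) : polyfun (fun z => z j)
| pf_add f g : polyfun f -> polyfun g -> polyfun (fun z => f z + g z)
| pf_mul f g : polyfun f -> polyfun g -> polyfun (fun z => f z * g z).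

Definition zclosed (K : nzRingType) (J : Type) (C : (J -> K) -> Prop) : Prop :=
  exists S : ((J -> K) -> K) -> Prop,
    (forall f, S f -> polyfun f) /\
    (forall z, C z <-> (forall f, S f -> f z = 0)).

Definition zirreducible (K : nzRingType) (J : Type) (X : (J -> K) -> Prop) : Prop :=
  (exists z, X z) /\
  forall C1 C2 : (J -> K) -> Prop, zclosed C1 -> zclosed C2 ->
    (forall z, X z -> C1 z \/ C2 z) ->
    (forall z, X z -> C1 z) \/ (forall z, X z -> C2 z).

(* coordinates of a product of matrix spaces prod_i M_(r i x c i) *)
Definition coords (I : Type) (r c : I -> nat) : Type :=
  {i : I & ('I_(r i) * 'I_(c i))%type}.

Definition mxat (K : nzRingType) (I : Type) (r c : I -> nat)
  (z : coords r c -> K) (i : I) : 'M[K]_(r i, c i) :=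
  \matrix_(a, b) z (existT _ i (a, b)).

Record quiver := Quiver {
  nv : nat;
  na : nat;
  qs : 'I_na -> 'I_nv;
  qt : 'I_na -> 'I_nv }.

Definition vert (Q : quiver) := 'I_(nv Q).
Definition arrow (Q : quiver) := 'I_(na Q).

(* a path (x, [:: a1; ...; ak]) starts at x and traverses a1 first, then a2,
   ...; the trivial path e_x is (x, [::]). *)
Definition qpath (Q : quiver) := ('I_(nv Q) * seq 'I_(na Q))%type.

Fixpoint validfrom (Q : quiver) (x : 'I_(nv Q)) (s : seq 'I_(na Q)) : bool :=
  match s with
  | [::] => true
  | a :: s' => (qs a == x) && validfrom (qt a) s'
  end.

Definition pvalid (Q : quiver) (p : qpath Q) : bool := validfrom p.1 p.2.
Definition ptgt (Q : quiver) (p : qpath Q) : 'I_(nv Q) := last p.1 (map (@qt Q) p.2).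

(* elements of kQ: coefficient functions on paths with finite support
   contained in the valid paths *)
Definition kQelt (K : nzRingType) (Q : quiver) (f : qpath Q -> K) : Prop :=
  (exists s : seq (qpath Q), forall p, f p != 0 -> p \in s) /\
  (forall p, f p != 0 -> pvalid p).

(* product u * f in which the path u is traversed first (f . u in the
   composition order), for a valid path u *)
Definition premul (K : nzRingType) (Q : quiver) (u : qpath Q) (f : qpath Q -> K)
  : qpath Q -> K :=
  fun p => if (p.1 == u.1) && (take (size u.2) p.2 == u.2)
           then f (ptgt u, drop (size u.2) p.2) else 0.

(* product in which the path u is traversed last (u . f) *)
Definition postmul (K : nzRingType) (Q : quiver) (u : qpath Q) (f : qpath Q -> K)
  : qpath Q -> K :=
  fun p => let q := (p.1, take (size p.2 - size u.2) p.2) in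
           if (size u.2 <= size p.2)%N && (drop (size p.2 - size u.2) p.2 == u.2)
              && (ptgt q == u.1)
           then f q else 0.

(* two-sided ideals of kQ: subspaces closed under multiplication by paths
   on both sides (paths span kQ) *)
Record kQideal (K : nzRingType) (Q : quiver) (I : (qpath Q -> K) -> Prop) : Prop := {
  ideal_elt : forall f, I f -> kQelt f;
  ideal_0 : I (fun _ => 0);
  ideal_add : forall f g, I f -> I g -> I (fun p => f p + g p);
  ideal_scale : forall (c : K) f, I f -> I (fun p => c * f p);
  ideal_pre : forall u f, pvalid u -> I f -> I (premul u f);
  ideal_post : forall u f, pvalid u -> I f -> I (postmul u f) }.

(* admissible ideal:  R_Q^m <= I <= R_Q^2 for some m >= 2 *)
Definition admissible (K : nzRingType) (Q : quiver) (I : (qpath Q -> K) -> Prop) : Prop :=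
  (forall f p, I f -> f p != 0 -> (2 <= size p.2)%N) /\
  (exists m, (2 <= m)%N /\
     forall p : qpath Q, pvalid p -> size p.2 = m ->
       I (fun q => (q == p)%:R)).

Definition repmx (K : nzRingType) (Q : quiver) (d : 'I_(nv Q) -> nat) : Type :=
  forall a : 'I_(na Q), 'M[K]_(d (qt a), d (qs a)).

(* pathmx V x s y : the matrix of the path (x, s) (if valid and ending at y),
   i.e. V_ak * ... * V_a1; it is 0 if (x, s) is not a valid path from x to y.
   (pid_mx is the identity when the two dimensions agree.) *)
Fixpoint pathmx (K : nzRingType) (Q : quiver) (d : 'I_(nv Q) -> nat) (V : repmx K d)
  (x : 'I_(nv Q)) (s : seq 'I_(na Q)) (y : 'I_(nv Q)) {struct s} : 'M[K]_(d y, d x) :=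
  match s with
  | [::] => if x == y then pid_mx (d x) else 0
  | a :: s' => pathmx V (qt a) s' y *m (if qs a == x then V a *m pid_mx (d (qs a)) else 0)
  end.

(* the (y,x)-block  e_y f(V) e_x  of the evaluation of f at V, computed over a
   list s containing the support of f *)
Definition evalblk (K : nzRingType) (Q : quiver) (d : 'I_(nv Q) -> nat) (V : repmx K d)
  (f : qpath Q -> K) (s : seq (qpath Q)) (x y : 'I_(nv Q)) : 'M[K]_(d y, d x) :=
  \sum_(p <- s | (p.1 == x) && (ptgt p == y)) f p *: pathmx V x p.2 y.

Definition satisfies (K : nzRingType) (Q : quiver) (d : 'I_(nv Q) -> nat) (V : repmx K d)
  (f : qpath Q -> K) : Prop :=
  forall s : seq (qpath Q), uniq s -> (forall p, f p != 0 -> p \in s) ->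
    forall x y, evalblk V f s x y = 0.

Definition isrep (K : nzRingType) (Q : quiver) (I : (qpath Q -> K) -> Prop)
  (d : 'I_(nv Q) -> nat) (V : repmx K d) : Prop :=
  forall f, I f -> satisfies V f.

(* coordinate blocks: V_a (e), W_a (d), f_x *)
Definition Hidx (Q : quiver) := ('I_(na Q) + 'I_(na Q) + 'I_(nv Q))%type.
Definition Hrow (Q : quiver) (e d : 'I_(nv Q) -> nat) (i : Hidx Q) : nat :=
  match i with
  | inl (inl a) => e (qt a)
  | inl (inr a) => d (qt a)
  | inr x => d x
  end.
Definition Hcol (Q : quiver) (e d : 'I_(nv Q) -> nat) (i : Hidx Q) : nat :=
  match i with
  | inl (inl a) => e (qs a)
  | inl (inr a) => d (qs a)
  | inr x => e x
  end.

Definition Hvar (K : nzRingType) (Q : quiver) (I : (qpath Q -> K) -> Prop)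
  (e d : 'I_(nv Q) -> nat) : (coords (Hrow e d) (Hcol e d) -> K) -> Prop :=
  fun z =>
    let V : repmx K e := fun a => mxat z (inl (inl a)) in
    let W : repmx K d := fun a => mxat z (inl (inr a)) in
    let f : forall x : 'I_(nv Q), 'M[K]_(d x, e x) := fun x => mxat z (inr x) in
    [/\ isrep I V, isrep I W &
        forall a : 'I_(na Q), W a *m f (qs a) = f (qt a) *m V a].

Definition hom_irreducible (K : nzRingType) (Q : quiver) (I : (qpath Q -> K) -> Prop)
  : Prop :=
  forall e d : 'I_(nv Q) -> nat, zirreducible (@Hvar K Q I e d).

(* coordinate blocks: U_a (e), V_a (d), Z_a (d_{ta} x e_{sa}) *)
Definition Eidx (Q : quiver) := ('I_(na Q) + 'I_(na Q) + 'I_(na Q))%type.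
Definition Erow (Q : quiver) (e d : 'I_(nv Q) -> nat) (i : Eidx Q) : nat :=
  match i with
  | inl (inl a) => e (qt a)
  | inl (inr a) => d (qt a)
  | inr a => d (qt a)
  end.
Definition Ecol (Q : quiver) (e d : 'I_(nv Q) -> nat) (i : Eidx Q) : nat :=
  match i with
  | inl (inl a) => e (qs a)
  | inl (inr a) => d (qs a)
  | inr a => e (qs a)
  end.

Definition Wext (K : nzRingType) (Q : quiver) (e d : 'I_(nv Q) -> nat)
  (V : repmx K d) (Z : forall a : 'I_(na Q), 'M[K]_(d (qt a), e (qs a)))
  (U : repmx K e) : repmx K (fun x => d x + e x) :=
  fun a => block_mx (V a) (Z a) 0 (U a).

Definition Evar (K : nzRingType) (Q : quiver) (I : (qpath Q -> K) -> Prop)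
  (e d : 'I_(nv Q) -> nat) : (coords (Erow e d) (Ecol e d) -> K) -> Prop :=
  fun z =>
    let U : repmx K e := fun a => mxat z (inl (inl a)) in
    let V : repmx K d := fun a => mxat z (inl (inr a)) in
    let Z : forall a : 'I_(na Q), 'M[K]_(d (qt a), e (qs a)) :=
      fun a => mxat z (inr a) in
    [/\ isrep I U, isrep I V & isrep I (Wext V Z U)].

Definition ext_irreducible (K : nzRingType) (Q : quiver) (I : (qpath Q -> K) -> Prop)
  : Prop :=
  forall e d : 'I_(nv Q) -> nat, zirreducible (@Evar K Q I e d).

(* Main.v *)
Set Warnings "-all".
Require Import Defs.
From HB Require Import structures.
From mathcomp Require Import all_boot all_order all_algebra ring.
From mathcomp Require Import fingroup perm.
From Stdlib Require Import FunctionalExtensionality Classical.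
Set Implicit Arguments. Unset Strict Implicit. Unset Printing Implicit Defensive.
Import GRing.Theory.
Local Open Scope ring_scope.

Section PF.
Variables (K : fieldType) (J : Type).

Lemma pf_ext (f g : (J -> K) -> K) : polyfun f -> (forall z, f z = g z) -> polyfun g.
Proof. by move=> Hf E; have <- : f = g by apply: functional_extensionality. Qed.

Lemma pf_sum (T : Type) (r : seq T) (P : pred T) (F : T -> (J -> K) -> K) :
  (forall i, P i -> polyfun (F i)) -> polyfun (fun z => \sum_(i <- r | P i) F i z).
Proof.
move=> HF; elim: r => [|i r IH].
  by apply: (pf_ext (pf_const _ 0)) => z; rewrite big_nil.
case Pi: (P i).
  apply: (pf_ext (pf_add (HF i Pi) IH)) => z; by rewrite big_cons Pi.
by apply: (pf_ext IH) => z; rewrite big_cons Pi.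
Qed.

Lemma pf_prod (T : Type) (r : seq T) (P : pred T) (F : T -> (J -> K) -> K) :
  (forall i, P i -> polyfun (F i)) -> polyfun (fun z => \prod_(i <- r | P i) F i z).
Proof.
move=> HF; elim: r => [|i r IH].
  by apply: (pf_ext (pf_const _ 1)) => z; rewrite big_nil.
case Pi: (P i).
  apply: (pf_ext (pf_mul (HF i Pi) IH)) => z; by rewrite big_cons Pi.
by apply: (pf_ext IH) => z; rewrite big_cons Pi.
Qed.

Definition pmx m n (M : (J -> K) -> 'M[K]_(m, n)) := forall i j, polyfun (fun z => M z i j).

Lemma pmx_mul m n p (M : (J -> K) -> 'M[K]_(m, n)) (N : (J -> K) -> 'M[K]_(n, p)) :
  pmx M -> pmx N -> pmx (fun z => M z *m N z).
Proof.
move=> HM HN i j.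
have H := @pf_sum _ (index_enum 'I_n) xpredT (fun k z => M z i k * N z k j)
   (fun k _ => pf_mul (HM i k) (HN k j)).
by apply: (pf_ext H) => z; rewrite mxE.
Qed.

Lemma pmx_const m n (A : 'M[K]_(m, n)) : pmx (fun _ => A).
Proof. by move=> i j; apply: pf_const. Qed.

Lemma pmx_col m1 m2 n (A : (J -> K) -> 'M[K]_(m1, n)) (B : (J -> K) -> 'M[K]_(m2, n)) :
  pmx A -> pmx B -> pmx (fun z => col_mx (A z) (B z)).
Proof.
move=> HA HB i j; case: (split_ordP i) => k ->.
  by apply: (pf_ext (HA k j)) => z; rewrite col_mxEu.
by apply: (pf_ext (HB k j)) => z; rewrite col_mxEd.
Qed.

Lemma pmx_row m n1 n2 (A : (J -> K) -> 'M[K]_(m, n1)) (B : (J -> K) -> 'M[K]_(m, n2)) :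
  pmx A -> pmx B -> pmx (fun z => row_mx (A z) (B z)).
Proof.
move=> HA HB i j; case: (split_ordP j) => k ->.
  by apply: (pf_ext (HA i k)) => z; rewrite row_mxEl.
by apply: (pf_ext (HB i k)) => z; rewrite row_mxEr.
Qed.

Lemma pf_det n (A : (J -> K) -> 'M[K]_n) : pmx A -> polyfun (fun z => \det (A z)).
Proof.
move=> HA.
have H := @pf_sum _ (index_enum _) xpredT
  (fun (s : 'S_n) z => (-1) ^+ perm.odd_perm s * \prod_i A z i (s i))
  (fun s _ => pf_mul (pf_const _ _) (@pf_prod _ (index_enum _) xpredT (fun i z => A z i (s i)) (fun i _ => HA i (s i)))).
by apply: (pf_ext H) => z.
Qed.

Lemma pmx_adj n (A : (J -> K) -> 'M[K]_n) : pmx A -> pmx (fun z => \adj (A z)).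
Proof.
move=> HA i j; apply: (@pf_ext _ (fun z => \adj (A z) i j)
  (pf_mul (pf_const _ ((-1) ^+ (j + i))) (pf_det (A := fun z => row' j (col' i (A z))) _))).
  by move=> k l; apply: (pf_ext (HA _ _)) => z; rewrite !mxE.
by move=> z; rewrite mxE.
Qed.

End PF.
Section Rep.
Variables (K : fieldType) (Q : quiver) (I : (qpath Q -> K) -> Prop).

Lemma pathmx_conj (d : 'I_(nv Q) -> nat) (V : repmx K d) (P Pi : forall x, 'M[K]_(d x)) :
  (forall x, P x *m Pi x = 1%:M) -> (forall x, Pi x *m P x = 1%:M) ->
  forall s x y, pathmx (fun a => P (qt a) *m V a *m Pi (qs a)) x s y
                = P y *m pathmx V x s y *m Pi x.
Proof.
move=> HP HPi s; elim: s => [|a s IH] x y /=.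
  have [exy|nxy] := eqVneq x y.
    by subst y; rewrite pid_mx_1 mulmx1 HP.
  by rewrite mulmx0 mul0mx.
rewrite IH; have [<-|nx] := eqVneq (qs a) x.
  rewrite !pid_mx_1 !mulmx1 !mulmxA.
  by rewrite -[_ *m Pi (qt a) *m P (qt a)]mulmxA HPi mulmx1.
by rewrite !mulmx0 mul0mx.
Qed.

Lemma isrep_conj (d : 'I_(nv Q) -> nat) (V : repmx K d) (P Pi : forall x, 'M[K]_(d x)) :
  (forall x, P x *m Pi x = 1%:M) -> (forall x, Pi x *m P x = 1%:M) ->
  isrep I V -> isrep I (fun a => P (qt a) *m V a *m Pi (qs a)).
Proof.
move=> HP HPi HV f If s us Hs x y.
have := HV f If s us Hs x y; rewrite /evalblk => H0.
transitivity (P y *m (\sum_(p <- s | (p.1 == x) && (ptgt p == y)) f p *: pathmx V x p.2 y) *m Pi x).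
  rewrite mulmx_sumr mulmx_suml; apply: eq_bigr => p _.
  by rewrite pathmx_conj // -scalemxAr -scalemxAl.
by rewrite H0 mulmx0 mul0mx.
Qed.

Lemma ul_entry m1 m2 n1 n2 (A : 'M[K]_(m1 + m2, n1 + n2)) i j :
  ulsubmx A i j = A (lshift _ i) (lshift _ j).
Proof. by rewrite !mxE. Qed.

Lemma pathmx_ul (d e : 'I_(nv Q) -> nat) (W : repmx K (fun x => d x + e x)) :
  (forall a, dlsubmx (W a : 'M_(d (qt a) + e (qt a), d (qs a) + e (qs a))) = 0) ->
  forall s x y,
  ulsubmx (pathmx W x s y : 'M_(d y + e y, d x + e x))
     = pathmx (fun a => ulsubmx (W a : 'M_(d (qt a) + e (qt a), d (qs a) + e (qs a)))) x s y
  /\ dlsubmx (pathmx W x s y : 'M_(d y + e y, d x + e x)) = 0.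
Proof.
move=> hW s; elim: s => [|a s IH] x y /=.
  have [exy|nxy] := eqVneq x y.
    subst y; rewrite !pid_mx_1 scalar_mx_block.
    by rewrite block_mxKul block_mxKdl.
  by split; apply/matrixP => i j; rewrite !mxE.
have [IH1 IH2] := IH (qt a) y.
have [<-|nx] := eqVneq (qs a) x.
  rewrite !pid_mx_1 !mulmx1.
  set M := (pathmx W (qt a) s y : 'M_(d y + e y, d (qt a) + e (qt a))).
  rewrite -[M]submxK -[W a : 'M_(d (qt a) + e (qt a), d (qs a) + e (qs a))]submxK.
  rewrite mulmx_block block_mxKul block_mxKdl -/M IH1 IH2 hW.
  by rewrite block_mxKul mulmx0 addr0 mul0mx add0r mulmx0.
by rewrite !mulmx0; split; apply/matrixP => i j; rewrite !mxE.
Qed.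

Lemma isrep_ul (d e : 'I_(nv Q) -> nat) (W : repmx K (fun x => d x + e x)) :
  (forall a, dlsubmx (W a : 'M_(d (qt a) + e (qt a), d (qs a) + e (qs a))) = 0) ->
  isrep I W ->
  isrep I (fun a => ulsubmx (W a : 'M_(d (qt a) + e (qt a), d (qs a) + e (qs a)))).
Proof.
move=> hW HW f If s us Hs x y.
have /matrixP H := HW f If s us Hs x y.
apply/matrixP => i j; move: (H (lshift _ i) (lshift _ j)).
rewrite /evalblk !summxE !mxE => Hz; rewrite -[X in _ = X]Hz; apply: eq_bigr => p _.
by rewrite -(proj1 (pathmx_ul hW p.2 x y)) !mxE.
Qed.

Lemma isrep0 (d : 'I_(nv Q) -> nat) :
  (forall f p, I f -> f p != 0 -> (2 <= size p.2)%N) ->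
  isrep I (fun a => 0 : 'M[K]_(d (qt a), d (qs a))).
Proof.
move=> Hadm f If s us Hs x y; rewrite /evalblk big1 // => p _.
have [->|fp] := eqVneq (f p) 0; first by rewrite scale0r.
have := Hadm f p If fp; case: p fp => p0 [|b t] //= _ _.
by case: ifP => _; rewrite ?mul0mx mulmx0 scaler0.
Qed.

End Rep.

Section Main.
Variables (K : fieldType) (Q : quiver) (I : (qpath Q -> K) -> Prop)
          (d e : 'I_(nv Q) -> nat).

Notation HC := (coords (Hrow (fun x => d x + e x) e) (Hcol (fun x => d x + e x) e)).
Notation EC := (coords (Erow e d) (Ecol e d)).

Definition hmx (z : HC -> K) (x : 'I_(nv Q)) : 'M[K]_(d x + e x) :=
  col_mx (row_mx (1%:M : 'M_(d x)) (0 : 'M_(d x, e x)))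
         (mxat z (inr x) : 'M_(e x, d x + e x)).

Definition Wp (z : HC -> K) a : 'M[K]_(d (qt a) + e (qt a), d (qs a) + e (qs a)) :=
  mxat z (inl (inl a)).

Definition Wpp (z : HC -> K) a : 'M[K]_(d (qt a) + e (qt a), d (qs a) + e (qs a)) :=
  hmx z (qt a) *m Wp z a *m invmx (hmx z (qs a)).

Definition Dz (z : HC -> K) : K := \prod_x \det (hmx z x).

Definition psi (z : HC -> K) : EC -> K := fun c =>
  match c with existT i kl =>
   (match i as i0 return 'I_(Erow e d i0) * 'I_(Ecol e d i0) -> K with
    | inl (inl a) => fun kl => z (existT _ (inl (inr a)) kl)
    | inl (inr a) => fun kl => Wpp z a (lshift _ kl.1) (lshift _ kl.2)
    | inr a => fun kl => Wpp z a (lshift _ kl.1) (rshift _ kl.2)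
    end) kl end.

Definition Uz (z : EC -> K) : repmx K e := fun a => mxat z (inl (inl a)).
Definition Vz (z : EC -> K) : repmx K d := fun a => mxat z (inl (inr a)).
Definition Zz (z : EC -> K) : forall a : 'I_(na Q), 'M[K]_(d (qt a), e (qs a)) :=
  fun a => mxat z (inr a).

Definition iota (z : EC -> K) : HC -> K := fun c =>
  match c with existT i kl =>
   (match i as i0 return 'I_(Hrow (fun x => d x + e x) e i0) *
                         'I_(Hcol (fun x => d x + e x) e i0) -> K with
    | inl (inl a) => fun kl => Wext (Vz z) (Zz z) (Uz z) a kl.1 kl.2
    | inl (inr a) => fun kl => z (existT _ (inl (inl a)) kl)
    | inr x => fun kl => (row_mx 0 1%:M : 'M[K]_(e x, d x + e x)) kl.1 kl.2
    end) kl end.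

Lemma psi1 z a : mxat (psi z) (inl (inl a)) = mxat z (inl (inr a)).
Proof. by apply/matrixP => i j; rewrite !mxE /= ?mxE. Qed.
Lemma psi2 z a : mxat (psi z) (inl (inr a)) = ulsubmx (Wpp z a).
Proof. by apply/matrixP => i j; rewrite !mxE /= ?mxE. Qed.
Lemma psi3 z a : mxat (psi z) (inr a) = ursubmx (Wpp z a).
Proof. by apply/matrixP => i j; rewrite !mxE /= ?mxE. Qed.
Lemma iota1 z a : mxat (iota z) (inl (inl a)) = Wext (Vz z) (Zz z) (Uz z) a.
Proof. by apply/matrixP => i j; rewrite !mxE /= ?mxE. Qed.
Lemma iota2 z a : mxat (iota z) (inl (inr a)) = mxat z (inl (inl a)).
Proof. by apply/matrixP => i j; rewrite !mxE /= ?mxE. Qed.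
Lemma iota3 z x : mxat (iota z) (inr x) = (row_mx 0 1%:M : 'M[K]_(e x, d x + e x)).
Proof. by apply/matrixP => i j; rewrite !mxE /= ?mxE. Qed.

Lemma hmx_iota z x : hmx (iota z) x = 1%:M.
Proof.
by rewrite /hmx iota3 [RHS](scalar_mx_block (d x) (e x)).
Qed.

Lemma Dz_iota z : Dz (iota z) = 1.
Proof. by rewrite /Dz big1 // => x _; rewrite hmx_iota det1. Qed.

Lemma psi_iota z : psi (iota z) = z.
Proof.
apply: functional_extensionality => -[[[a|a]|a] [k l]] //=.
  by rewrite /Wpp !hmx_iota invmx1 mul1mx mulmx1 /Wp iota1 /Wext block_mxEul mxE.
by rewrite /Wpp !hmx_iota invmx1 mul1mx mulmx1 /Wp iota1 /Wext block_mxEur mxE.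
Qed.


Lemma Hvar_Evar z : @Hvar K Q I (fun x => d x + e x) e z -> Dz z != 0 -> @Evar K Q I e d (psi z).
Proof.
rewrite /Hvar /Evar /= => -[HW HU Hc] Dn.
have hu x : hmx z x \in unitmx.
  by rewrite unitmxE unitfE; move/prodf_neq0: Dn; apply.
have hf x : (mxat z (inr x) : 'M_(e x, d x + e x)) *m invmx (hmx z x) = row_mx 0 1%:M.
  have := mulmxV (hu x); rewrite /hmx mul_col_mx [RHS](scalar_mx_block (d x) (e x)).
  by case/eq_col_mx.
have hd a : dsubmx (Wpp z a) = row_mx 0 (mxat z (inl (inr a))).
  rewrite /Wpp /hmx /Wp !mul_col_mx col_mxKd -Hc -mulmxA hf.
  by rewrite mul_mx_row mulmx0 mulmx1.
have hdl a : dlsubmx (Wpp z a) = 0 by rewrite /dlsubmx hd row_mxKl.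
have hdr a : drsubmx (Wpp z a) = mxat z (inl (inr a)) by rewrite /drsubmx hd row_mxKr.
have HWpp : @isrep K Q I (fun x => d x + e x) (Wpp z).
  apply: (isrep_conj (P := hmx z) (Pi := fun x => invmx (hmx z x))) => //.
  - by move=> x; rewrite mulmxV.
  - by move=> x; rewrite mulVmx.
split.
- have -> : (fun a => mxat (psi z) (inl (inl a))) = (fun a => mxat z (inl (inr a))) by
    apply: functional_extensionality_dep => a; rewrite psi1.
  exact: HU.
- have -> : (fun a => mxat (psi z) (inl (inr a))) = (fun a => ulsubmx (Wpp z a)) by
    apply: functional_extensionality_dep => a; rewrite psi2.
  exact: isrep_ul.
- have -> : Wext (fun a => mxat (psi z) (inl (inr a))) (fun a => mxat (psi z) (inr a))
        (fun a => mxat (psi z) (inl (inl a))) = Wpp z.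
    apply: functional_extensionality_dep => a.
    by rewrite /Wext psi1 psi2 psi3 -hdl -hdr submxK.
  exact: HWpp.
Qed.

Lemma Evar_Hvar z : @Evar K Q I e d z -> @Hvar K Q I (fun x => d x + e x) e (iota z).
Proof.
rewrite /Hvar /Evar /= => -[HU HV HW].
split.
- have -> : (fun a => mxat (iota z) (inl (inl a))) = Wext (Vz z) (Zz z) (Uz z) by
    apply: functional_extensionality_dep => a; rewrite iota1.
  exact: HW.
- have -> : (fun a => mxat (iota z) (inl (inr a))) = Uz z by
    apply: functional_extensionality_dep => a; rewrite iota2.
  exact: HU.
- move=> a; rewrite iota2 !iota3 iota1 /Wext mul_mx_row mulmx0 mulmx1 mul_row_block.
  by rewrite !mul0mx !mul1mx ?add0r ?addr0.
Qed.

Lemma scale_entry m n (c : K) (A : 'M[K]_(m, n)) i j : (c *: A) i j = c * A i j.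
Proof. by rewrite mxE. Qed.

Lemma pmx_mxat i : pmx (fun z : HC -> K => mxat z i).
Proof. by move=> k l; apply: (pf_ext (pf_var _ (existT _ i (k, l)))) => z; rewrite mxE. Qed.

Lemma pmx_hmx x : pmx (fun z => hmx z x).
Proof.
apply: pmx_col; first exact: pmx_const.
exact: (pmx_mxat (i := inr x)).
Qed.

Lemma pf_exp (J : Type) (f : (J -> K) -> K) n : polyfun f -> polyfun (fun z => f z ^+ n).
Proof.
move=> Hf; elim: n => [|n IH].
  by apply: (pf_ext (pf_const _ 1)) => z; rewrite expr0.
by apply: (pf_ext (pf_mul Hf IH)) => z; rewrite exprS.
Qed.

Lemma pf_Dz : polyfun Dz.
Proof.
apply: (pf_ext (@pf_prod _ _ _ (index_enum _) xpredT (fun x z => \det (hmx z x))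
  (fun x _ => pf_det (pmx_hmx (x := x))))) => z //.
Qed.

Lemma transport (g : (EC -> K) -> K) : polyfun g ->
  exists N P, polyfun P /\ forall z, Dz z != 0 -> P z = Dz z ^+ N * g (psi z).
Proof.
elim=> [c|c|f1 f2 _ [N1 [P1 [HP1 E1]]] _ [N2 [P2 [HP2 E2]]]
           |f1 f2 _ [N1 [P1 [HP1 E1]]] _ [N2 [P2 [HP2 E2]]]].
- by exists 0%N, (fun _ => c); split; [exact: pf_const | move=> z _; rewrite expr0 mul1r].
- case: c => -[[a|a]|a] [k l].
  + exists 0%N, (fun z => z (existT _ (inl (inr a)) (k, l))); split; first exact: pf_var.
    by move=> z _; rewrite expr0 mul1r.
  + pose R (z : HC -> K) := \prod_(x | x != qs a) \det (hmx z x).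
    exists 1%N, (fun z => R z * (hmx z (qt a) *m Wp z a *m \adj (hmx z (qs a))) (lshift _ k) (lshift _ l)).
    split.
      apply: pf_mul.
        exact: (@pf_prod _ _ _ (index_enum _) (fun x => x != qs a) (fun x z => \det (hmx z x))
                (fun x _ => pf_det (pmx_hmx (x := x)))).
      exact: (pmx_mul (pmx_mul (pmx_hmx (x := qt a)) (pmx_mxat (i := inl (inl a)))) (pmx_adj (pmx_hmx (x := qs a)))).
    move=> z Dn /=.
    have hn : \det (hmx z (qs a)) != 0 by move/prodf_neq0: Dn; apply.
    rewrite /Wpp /invmx unitmxE unitfE hn -scalemxAr scale_entry expr1 /Dz (bigD1 (qs a)) //=.
    rewrite -/(R z); field; exact: hn.
  + pose R (z : HC -> K) := \prod_(x | x != qs a) \det (hmx z x).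
    exists 1%N, (fun z => R z * (hmx z (qt a) *m Wp z a *m \adj (hmx z (qs a))) (lshift _ k) (rshift _ l)).
    split.
      apply: pf_mul.
        exact: (@pf_prod _ _ _ (index_enum _) (fun x => x != qs a) (fun x z => \det (hmx z x))
                (fun x _ => pf_det (pmx_hmx (x := x)))).
      exact: (pmx_mul (pmx_mul (pmx_hmx (x := qt a)) (pmx_mxat (i := inl (inl a)))) (pmx_adj (pmx_hmx (x := qs a)))).
    move=> z Dn /=.
    have hn : \det (hmx z (qs a)) != 0 by move/prodf_neq0: Dn; apply.
    rewrite /Wpp /invmx unitmxE unitfE hn -scalemxAr scale_entry expr1 /Dz (bigD1 (qs a)) //=.
    rewrite -/(R z); field; exact: hn.
- exists (N1 + N2)%N, (fun z => Dz z ^+ N2 * P1 z + Dz z ^+ N1 * P2 z); split.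
    by apply: pf_add; apply: pf_mul => //; apply: pf_exp; exact: pf_Dz.
  by move=> z Dn; rewrite E1 // E2 // exprD; ring.
- exists (N1 + N2)%N, (fun z => P1 z * P2 z); split; first exact: pf_mul.
  by move=> z Dn; rewrite E1 // E2 // exprD; ring.
Qed.

End Main.

Theorem corollary3p3 (K : closedFieldType) (Q : quiver)
  (I : (qpath Q -> K) -> Prop) :
  kQideal I -> admissible I ->
  hom_irreducible I -> ext_irreducible I.
Proof.
move=> HI [Hadm _] hirr e d; split.
  exists (fun _ => 0); rewrite /Evar /=.
  have H0 (r c : Eidx Q -> nat) i : mxat (fun _ : coords r c => 0 : K) i = 0.
    by apply/matrixP => k l; rewrite !mxE.
  rewrite /Wext.
  have -> : (fun a => block_mx (mxat (fun _ : coords (Erow e d) (Ecol e d) => 0 : K) (inl (inr a)))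
      (mxat (fun _ : coords (Erow e d) (Ecol e d) => 0 : K) (inr a)) 0
      (mxat (fun _ : coords (Erow e d) (Ecol e d) => 0 : K) (inl (inl a))))
      = (fun a => 0 : 'M[K]_(d (qt a) + e (qt a), d (qs a) + e (qs a))).
    by apply: functional_extensionality_dep => a; rewrite !H0 block_mx0.
  have -> : (fun a => mxat (fun _ : coords (Erow e d) (Ecol e d) => 0 : K) (inl (inr a)))
      = (fun a => 0 : 'M[K]_(d (qt a), d (qs a))).
    by apply: functional_extensionality_dep => a; rewrite !H0.
  have -> : (fun a => mxat (fun _ : coords (Erow e d) (Ecol e d) => 0 : K) (inl (inl a)))
      = (fun a => 0 : 'M[K]_(e (qt a), e (qs a))).
    by apply: functional_extensionality_dep => a; rewrite !H0.
  by split; apply: isrep0.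
move=> C1 C2 [S1 [HS1 HC1]] [S2 [HS2 HC2]] Hcov.
apply: NNPP => /not_or_and [n1 n2].
have [z1 H1z] : exists z, ~ (@Evar K Q I e d z -> C1 z) := not_all_ex_not _ _ n1.
have [Ez1 nC1] := imply_to_and _ _ H1z.
have [z2 H2z] : exists z, ~ (@Evar K Q I e d z -> C2 z) := not_all_ex_not _ _ n2.
have [Ez2 nC2] := imply_to_and _ _ H2z.
have [g1 Hg1] : exists g, ~ (S1 g -> g z1 = 0).
  by apply: not_all_ex_not => H; apply: nC1; apply/HC1.
have [Sg1 g1n] := imply_to_and _ _ Hg1.
have [g2 Hg2] : exists g, ~ (S2 g -> g z2 = 0).
  by apply: not_all_ex_not => H; apply: nC2; apply/HC2.
have [Sg2 g2n] := imply_to_and _ _ Hg2.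
have [N1 [P1 [HP1 E1]]] := transport (d:=d) (e:=e) (HS1 g1 Sg1).
have [N2 [P2 [HP2 E2]]] := transport (d:=d) (e:=e) (HS2 g2 Sg2).
have cl (P : (coords (Hrow (fun x => d x + e x) e) (Hcol (fun x => d x + e x) e) -> K) -> K) :
    polyfun P -> zclosed (fun z => Dz z * P z = 0).
  move=> HP; exists (fun f => f = (fun z => Dz z * P z)); split.
    by move=> f ->; apply: pf_mul => //; exact: pf_Dz.
  by move=> z; split => [H f -> //|H]; exact: (H _ erefl).
have cov : forall z, @Hvar K Q I (fun x => d x + e x) e z ->
    Dz z * P1 z = 0 \/ Dz z * P2 z = 0.
  move=> z Hz; have [D0|Dn] := eqVneq (Dz z) 0; first by left; rewrite D0 mul0r.
  case: (Hcov _ (Hvar_Evar Hz Dn)) => [C|C]; [left|right].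
    by rewrite E1 // (proj1 (HC1 _) C g1 Sg1) mulr0 mulr0.
  by rewrite E2 // (proj1 (HC2 _) C g2 Sg2) mulr0 mulr0.
have [H1|H2] := proj2 (hirr (fun x => d x + e x) e) _ _ (cl _ HP1) (cl _ HP2) cov.
- apply: g1n; have := H1 _ (Evar_Hvar Ez1).
  by rewrite E1 ?Dz_iota ?oner_neq0 // psi_iota expr1n !mul1r.
- apply: g2n; have := H2 _ (Evar_Hvar Ez2).
  by rewrite E2 ?Dz_iota ?oner_neq0 // psi_iota expr1n !mul1r.
Qed.
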